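(* For any instance of MPMD or MBPMD, Greedy Dual eventually matches every request, i.e., it returns a feasible perfect matching of all $2m$ requests.
   Context: Problem (MPMD / MBPMD). Let $(\mathcal{X},\mathrm{dist})$ be a metric space. An instance consists of $2m$ requests $u_1,\dots,u_{2m}$. Each request $u$ is a triple $(\mathrm{pos}(u),\mathrm{atime}(u),\mathrm{sgn}(u))$, where $\mathrm{pos}(u)\in\mathcal{X}$ is its location and $\mathrm{atime}(u)\ge0$ is its arrival time, with arrival times nondecreasing. In MPMD, $\mathrm{sgn}(u)=0$ for all requests. In MBPMD, exactly $m$ requests have sign $+1$ and $m$ have sign $-1$. At time $\tau$, an algorithm may match two arrived, unmatched requests $u,v$ with $\mathrm{sgn}(u)=-\mathrm{sgn}(v)$, at cost $\mathrm{dist}(\mathrm{pos}(u),\mathrm{pos}(v))$ (connection cost) plus $(\tau-\mathrm{atime}(u))+(\tau-\mathrm{atime}(v))$ (waiting costs). All requests must eventually be matched. Notation. Edges are unordered pairs $\{u,v\}$ of distinct requests with $\mathrm{sgn}(u)=-\mathrm{sgn}(v)$. For a set $S$ of requests, $\delta(S)$ is the set of edges with exactly one endpoint in $S$. In MPMD, $\mathrm{sur}(S)=|S|\bmod 2$; in MBPMD, $\mathrm{sur}(S)=|\sum_{u\in S}\mathrm{sgn}(u)|$. For an edge $e=(u,v)$, $\mathrm{cost}(e)=\mathrm{dist}(\mathrm{pos}(u),\mathrm{pos}(v))+|\mathrm{atime}(u)-\mathrm{atime}(v)|$. Algorithm Greedy Dual (GD). GD maintains a dual variable $y_S\ge0$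 for every set $S$ of already-arrived requests; $y_S(\tau)$ denotes its value at time $\tau$. It also maintains a partition of the arrived requests into active sets, with $\mathcal{A}(u)$ denoting the active set containing $u$. An active set is growing if it contains at least one free request, and non-growing otherwise. - When a request $u$ arrives, $\mathcal{A}(u)\leftarrow\{u\}$ becomes a new active set, and $y_S\leftarrow 0$ for every new set $S$ containing $u$. - Tight-constraint event: while there is an edge $e=(u,v)$ between arrived requests with $\mathcal{A}(u)\neq\mathcal{A}(v)$ and $\sum_{S:\,e\in\delta(S)}y_S=\mathrm{cost}(e)$, GD does the following. It merges the two sets: $S=\mathcal{A}(u)\cup\mathcal{A}(v)$ becomes active and $\mathcal{A}(w)\leftarrow S$ for all $w\in S$, while $\mathcal{A}(u)$ and $\mathcal{A}(v)$ become inactive. It marks the edge $e$. Then, while there are free $u',v'\in S$ with $\mathrm{sgn}(u')=-\mathrm{sgn}(v')$, it matches $u'$ with $v'$ at the current time. - At all other times, $y_S$ increases continuously at rate $1$ (the same rate as time) for every active growing set $S$; all other dual variables stay constant. *)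

(* Defs.v *)
(* Greedy Dual (GD) for MPMD / MBPMD, modelled as an
   event-driven nondeterministic transition system. *)
From HB Require Import structures.
From mathcomp Require Import all_boot all_order all_algebra.
Set Implicit Arguments.
Unset Strict Implicit.
Unset Printing Implicit Defensive.
Import Order.TTheory GRing.Theory Num.Theory.
Local Open Scope ring_scope.

Definition is_metric (R : realFieldType) (X : Type) (dist : X -> X -> R) : Prop :=
  [/\ (forall x y, 0 <= dist x y),
      (forall x y, dist x y = 0 <-> x = y),
      (forall x y, dist x y = dist y x) &
      (forall x y z, dist x z <= dist x y + dist y z)].

Definition valid_times (R : realFieldType) (n : nat) (atime : 'I_n -> R) : Prop :=
  (forall i, 0 <= atime i) /\
  (forall i j : 'I_n, (i <= j)%N -> atime i <= atime j).

Definition MPMD_signs (n : nat) (sgn : 'I_n -> int) : Prop :=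
  forall i, sgn i = 0.

Definition MBPMD_signs (m : nat) (sgn : 'I_(m.*2) -> int) : Prop :=
  (forall i, sgn i = 1 \/ sgn i = -1) /\ #|[set i | sgn i == 1]| = m.

Section GD.
Context (R : realFieldType) (X : Type) (dist : X -> X -> R) (n : nat)
        (pos : 'I_n -> X) (atime : 'I_n -> R) (sgn : 'I_n -> int).
Local Notation I := 'I_n.

(* state of GD at the current time tau:
   arrived = set of arrived requests, y = dual variables,
   act u = active set A(u) containing u (meaningful for arrived u),
   mate u = Some v iff u is matched with v (None = u is free). *)
Record state := State {
  tau : R;
  arrived : {set I};
  y : {set I} -> R;
  act : I -> {set I};
  mate : I -> option I }.

Definition is_edge (u v : I) : bool := (u != v) && (sgn u == - sgn v).

Definition cost (u v : I) : R := dist (pos u) (pos v) + `|atime u - atime v|.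

Definition dual_load (yv : {set I} -> R) (u v : I) : R :=
  \sum_(S : {set I} | (u \in S) != (v \in S)) yv S.

Definition tight_cross (s : state) (yv : {set I} -> R) (u v : I) : Prop :=
  [/\ u \in arrived s, v \in arrived s, is_edge u v, act s u != act s v &
      dual_load yv u v = cost u v].

Inductive match_loop (S : {set I}) : (I -> option I) -> (I -> option I) -> Prop :=
| ml_done mt :
    (forall u v, u \in S -> v \in S -> mt u = None -> mt v = None -> ~~ is_edge u v) ->
    match_loop S mt mt
| ml_step mt mt' u v :
    u \in S -> v \in S -> mt u = None -> mt v = None -> is_edge u v ->
    match_loop S (fun w => if w == u then Some v else if w == v then Some u else mt w) mt' ->
    match_loop S mt mt'.

Definition active_growing (s : state) (S : {set I}) : bool :=
  [exists u in arrived s, act s u == S] && [exists w in S, mate s w == None].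

Definition grow_y (s : state) (d : R) : {set I} -> R :=
  fun S => if active_growing s S then y s S + d else y s S.

Inductive gd_step : state -> state -> Prop :=
| step_arrive s u :
    u \notin arrived s -> atime u = tau s ->
    (forall v : I, (v < u)%N -> v \in arrived s) ->
    gd_step s (State (tau s) (u |: arrived s)
                     (fun S => if u \in S then 0 else y s S)
                     (fun w => if w == u then [set u] else act s w)
                     (mate s))
| step_merge s u v mt' :
    tight_cross s (y s) u v ->
    match_loop (act s u :|: act s v) (mate s) mt' ->
    gd_step s (State (tau s) (arrived s) (y s)
                     (fun w => if w \in act s u :|: act s v
                               then act s u :|: act s v else act s w)
                     mt')
| step_grow s d :
    (forall v, v \notin arrived s -> tau s < atime v) ->
    (forall u v, ~ tight_cross s (y s) u v) ->
    0 < d ->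
    (forall v, v \notin arrived s -> tau s + d <= atime v) ->
    (forall u v, u \in arrived s -> v \in arrived s -> is_edge u v ->
       act s u != act s v -> dual_load (grow_y s d) u v <= cost u v) ->
    ((exists2 v, v \notin arrived s & tau s + d = atime v) \/
     (exists u v, tight_cross s (grow_y s d) u v)) ->
    gd_step s (State (tau s + d) (arrived s) (grow_y s d) (act s) (mate s)).

Definition gd_init : state :=
  State 0 set0 (fun _ => 0) (fun _ => set0) (fun _ => None).

Inductive gd_reachable : state -> Prop :=
| reach_init : gd_reachable gd_init
| reach_step s s' : gd_reachable s -> gd_step s s' -> gd_reachable s'.

Definition gd_infinite_run : Prop :=
  exists f : nat -> state, f 0%N = gd_init /\ forall k, gd_step (f k) (f k.+1).

Definition perfect_feasible (mt : I -> option I) : Prop :=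
  forall u, exists v, [/\ mt u = Some v, mt v = Some u & is_edge u v].

End GD.

(* Main.v *)
Require Import Defs.
From HB Require Import structures.
From mathcomp Require Import all_boot all_order all_algebra.
From mathcomp Require Import zify ring lra.
Set Implicit Arguments.
Unset Strict Implicit.
Unset Printing Implicit Defensive.
Import Order.TTheory GRing.Theory Num.Theory.
Local Open Scope ring_scope.

Section Proof.
Variables (R : realFieldType) (X : Type) (dist : X -> X -> R) (n : nat)
        (pos : 'I_n -> X) (atime : 'I_n -> R) (sgn : 'I_n -> int).
Hypothesis dist_ge0 : forall x y, 0 <= dist x y.
Hypothesis atime_ge0 : forall i, 0 <= atime i.
Hypothesis atime_mono : forall i j : 'I_n, (i <= j)%N -> atime i <= atime j.
Local Notation I := 'I_n.
Local Notation state := (state R n).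
Local Notation gd_step := (gd_step dist pos atime sgn).
Local Notation tight_cross := (tight_cross dist pos atime sgn).
Local Notation is_edge := (is_edge sgn).
Local Notation cost := (cost dist pos atime).

Record Inv (s : state) : Prop := {
  i1 : forall w, w \in arrived s -> w \in act s w;
  i2 : forall w1 w2, w1 \in arrived s -> w2 \in arrived s -> w2 \in act s w1 -> act s w2 = act s w1;
  i3 : forall w, w \in arrived s -> act s w \subset arrived s;
  i5 : forall v, v \notin arrived s -> tau s <= atime v;
  i6 : forall u v, u \in arrived s -> v \in arrived s -> is_edge u v -> act s u != act s v ->
          dual_load (y s) u v <= cost u v;
  i7 : forall v, v \in arrived s -> \sum_(S : {set I} | v \in S) y s S <= tau s - atime v;
  i8 : forall S, 0 <= y s S;
  m1 : forall u v, mate s u = Some v -> mate s v = Some u /\ is_edge u v;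
  m4 : forall w1 w2, w1 \in arrived s -> w2 \in arrived s -> act s w1 = act s w2 ->
          mate s w1 = None -> mate s w2 = None -> ~~ is_edge w1 w2 }.

Lemma Inv_init : Inv (gd_init R n).
Proof.
split => //=; try by move=> *; rewrite ?inE.
all: by move=> ?; rewrite inE.

Qed.


Definition M1 (mt : I -> option I) := forall u v, mt u = Some v -> mt v = Some u /\ is_edge u v.

Lemma edge_neq u v : is_edge u v -> u != v.
Proof. by case/andP. Qed.

Lemma edge_sym u v : is_edge u v -> is_edge v u.
Proof.
rewrite /Defs.is_edge => /andP [h1 /eqP h2]; rewrite eq_sym h1 /= h2 opprK eqxx //.
Qed.

Lemma match_loop_prop S mt mt' : match_loop sgn S mt mt' ->
  [/\ M1 mt -> M1 mt',
      forall w, w \notin S -> mt' w = mt w,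
      forall w, mt' w = None -> mt w = None &
      forall u v, u \in S -> v \in S -> mt' u = None -> mt' v = None -> ~~ is_edge u v].
Proof.
elim => {mt mt'} [mt hd | mt mt' u v uS vS hu hv he _ [IH1 IH2 IH3 IH4]].
  by split.
split.
- move=> hM; apply: IH1 => a b /=.
  have uv := edge_neq he.
  case: (eqVneq a u) => [-> [<-] | au].
    by rewrite eqxx eq_sym (negbTE uv).
  case: (eqVneq a v) => [-> [<-] | av].
    by rewrite eqxx; split => //; apply: edge_sym.
  move=> hab; have [hba eab] := hM _ _ hab.
  have bu : b != u by apply/eqP => bu; move: hba; rewrite -bu in hu; rewrite hu.
  have bv : b != v by apply/eqP => bv; move: hba; rewrite -bv in hv; rewrite hv.
  by rewrite (negbTE bu) (negbTE bv).
- move=> w wS; rewrite IH2 //.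
  have wu : w != u by apply/eqP => e; rewrite e uS in wS.
  have wv : w != v by apply/eqP => e; rewrite e vS in wS.
  by rewrite (negbTE wu) (negbTE wv).
- move=> w /IH3; case: (eqVneq w u) => // _; case: (eqVneq w v) => //.
- exact: IH4.
Qed.

Lemma Inv_merge s u v mt' : Inv s -> tight_cross s (y s) u v ->
  match_loop sgn (act s u :|: act s v) (mate s) mt' ->
  Inv (State (tau s) (arrived s) (y s)
         (fun w => if w \in act s u :|: act s v then act s u :|: act s v else act s w) mt').
Proof.
move=> [h1 h2 h3 h5 h6 h7 h8 hm1 hm4] [ua va _ uv _] /match_loop_prop [L1 L2 L3 L4].
set S := act s u :|: act s v.
have SA : S \subset arrived s by rewrite subUset !h3.
have out : forall w, w \in arrived s -> w \notin S -> forall z, z \in S -> z \notin act s w.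
  move=> w wa wS z zS; apply/negP => zw.
  have za : z \in arrived s by apply: (subsetP SA).
  have e := h2 _ _ wa za zw.
  have ww := h1 _ wa; rewrite -e in ww.
  move: zS wS; rewrite !inE => /orP [] zA.
    by rewrite -(h2 _ _ ua za zA) ww.
  by rewrite -(h2 _ _ va za zA) ww orbT.
split => //=.
- by move=> w wa; case: ifP => // _; exact: h1.
- move=> w1 w2 w1a w2a; case: ifP => w1S; case: ifP => w2S //.
    by move=> w2w1; have := out _ w1a (negbT w1S) _ w2S; rewrite w2w1.
  exact: h2.
- by move=> w wa; case: ifP => _ //; exact: h3.
- move=> a b aa ba eab; case: ifP => aS; case: ifP => bS //; rewrite ?eqxx // => hne; apply: h6 => //.
  + by apply/eqP => e; have := out _ ba (negbT bS) a aS; rewrite -e h1.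
  + by apply/eqP => e; have := out _ aa (negbT aS) b bS; rewrite e h1.
- exact: L1.
- move=> w1 w2 w1a w2a; case: ifP => w1S; case: ifP => w2S.
  + by move=> _; apply: L4.
  + move=> e; have := out _ w2a (negbT w2S) _ w1S.
    by rewrite -e w1S.
  + move=> e; have := out _ w1a (negbT w1S) _ w2S.
    by rewrite e w2S.
  + by move=> e /L3 n1 /L3 n2; apply: hm4.
Qed.

Lemma arr_load_u (yv : {set I} -> R) u z : (forall S, 0 <= yv S) ->
  \sum_(S : {set I} | (u \in S) != (z \in S)) (if u \in S then 0 else yv S)
    <= \sum_(S : {set I} | z \in S) yv S.
Proof.
move=> h0; rewrite [X in X <= _]big_mkcond [X in _ <= X]big_mkcond /=.
apply: ler_sum => S _; case: (u \in S); case: (z \in S) => //=.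
Qed.


Lemma cost_ge_u u z : atime u - atime z <= cost u z /\ atime u - atime z <= cost z u.
Proof.
rewrite /Defs.cost; split.
  by apply: ler_wpDl; [exact: dist_ge0 | exact: ler_norm].
by apply: ler_wpDl; [exact: dist_ge0 | rewrite distrC; exact: ler_norm].
Qed.

Lemma Inv_arrive s u : Inv s -> u \notin arrived s -> atime u = tau s ->
  Inv (State (tau s) (u |: arrived s) (fun S => if u \in S then 0 else y s S)
         (fun w => if w == u then [set u] else act s w) (mate s)).
Proof.
move=> [h1 h2 h3 h5 h6 h7 h8 hm1 hm4] un au.
have y'le : forall S : {set I}, (if u \in S then 0 else y s S) <= y s S.
  by move=> S; case: ifP.
have neq_u : forall w, w \in arrived s -> w != u.
  by move=> w wa; apply/eqP => e; rewrite -e wa in un.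
split => //=.
- move=> w; rewrite in_setU1; case: (eqVneq w u) => [-> _|_ /= wa]; first by rewrite inE.
  exact: h1.
- move=> w1 w2; rewrite !in_setU1; case: (eqVneq w1 u) => [-> _ _|w1u /= w1a].
    by move=> /set1P ->; rewrite eqxx.
  case: (eqVneq w2 u) => [-> _ |w2u /= w2a]; last exact: h2.
  by move/(subsetP (h3 _ w1a)); rewrite (negbTE un).
- move=> w; rewrite in_setU1; case: (eqVneq w u) => [-> _|_ /= wa].
    by rewrite sub1set setU11.
  by apply: subset_trans (h3 _ wa) _; apply: subsetUr.
- by move=> v; rewrite in_setU1 negb_or => /andP [_]; exact: h5.
- move=> a b; rewrite !in_setU1; case: (eqVneq a u) => [-> _|au' /= aa].
    case: (eqVneq b u) => [-> _|bu /= ba eab _]; first by rewrite /Defs.is_edge eqxx.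
    apply: le_trans (arr_load_u _ _ h8) _; apply: le_trans (h7 _ ba) _.
    by rewrite -au; case: (cost_ge_u u b) => hh _.
  case: (eqVneq b u) => [-> _|bu /= ba eab hne].
    move=> _ _; rewrite /Defs.dual_load (eq_bigl (fun S : {set I} => (u \in S) != (a \in S))); last first.
      by move=> S; rewrite eq_sym.
    apply: le_trans (arr_load_u _ _ h8) _; apply: le_trans (h7 _ aa) _.
    by rewrite -au; case: (cost_ge_u u a) => _ hh.
  apply: le_trans (h6 _ _ aa ba eab hne); apply: ler_sum => S _; exact: y'le.
- move=> v; rewrite in_setU1; case: (eqVneq v u) => [-> _|vu /= va].
    by rewrite big1 ?au ?subrr // => S ->.
  apply: le_trans (h7 _ va); apply: ler_sum => S _; exact: y'le.
- by move=> S; case: ifP.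
- move=> w1 w2; rewrite !in_setU1; case: (eqVneq w1 u) => [-> _|w1u /= w1a];
    case: (eqVneq w2 u) => [-> _|w2u /= w2a] //.
  + by rewrite /Defs.is_edge eqxx.
  + move=> e; have := h1 _ w2a; rewrite -e inE => /eqP e2; by rewrite e2 eqxx in w2u.
  + move=> e; have := h1 _ w1a; rewrite e inE => /eqP e2; by rewrite e2 eqxx in w1u.
  + exact: hm4.
Qed.

Lemma grow_yE (s : state) d S : grow_y s d S = y s S + (if active_growing s S then d else 0).
Proof. by rewrite /grow_y; case: ifP; rewrite ?addr0. Qed.

Lemma sum_AG_le s v (d : R) : Inv s -> v \in arrived s -> 0 <= d ->
  \sum_(S : {set I} | v \in S) (if active_growing s S then d else 0) <= d.
Proof.
move=> hI va d0.
have E : \sum_(S : {set I}) (if S == act s v then d else 0) = d.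
  by rewrite -big_mkcond big_pred1_eq.
rewrite -[X in _ <= X]E.
  rewrite big_mkcond /=; apply: ler_sum => S _.
  case vS: (v \in S); case ag: (active_growing s S) => //=; try by case: ifP.
  move: ag; rewrite /active_growing => /andP [/existsP [w /andP [wa /eqP wS]] _].
  rewrite -wS in vS.
  by rewrite -wS (i2 hI wa va vS) eqxx.
Qed.

Lemma Inv_grow s d : Inv s -> 0 < d ->
  (forall v, v \notin arrived s -> tau s + d <= atime v) ->
  (forall u v, u \in arrived s -> v \in arrived s -> is_edge u v ->
       act s u != act s v -> dual_load (grow_y s d) u v <= cost u v) ->
  Inv (State (tau s + d) (arrived s) (grow_y s d) (act s) (mate s)).
Proof.
move=> hI d0 hv hl; case: (hI) => h1 h2 h3 h5 h6 h7 h8 hm1 hm4.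
split => //=.
- move=> v va; under eq_bigr do rewrite grow_yE.
  rewrite big_split /=.
  have := sum_AG_le hI va (ltW d0); have := h7 _ va.
  move=> a b; apply: le_trans (lerD a b) _; rewrite addrAC; exact: lexx.
- by move=> S; rewrite grow_yE; apply: addr_ge0 => //; case: ifP => // _; exact: ltW.
Qed.

Lemma Inv_step s s' : Inv s -> gd_step s s' -> Inv s'.
Proof.
move=> hI st; case: st hI => [s0 u un au _ | s0 u v mt' tc ml | s0 d _ _ d0 hv hl _] hI.
- exact: Inv_arrive.
- exact: Inv_merge.
- exact: Inv_grow.
Qed.

Lemma Inv_reach s : gd_reachable dist pos atime sgn s -> Inv s.
Proof. elim => [|t t' _ IH st]; [exact: Inv_init | exact: Inv_step st]. Qed.

Definition P (s : state) : nat :=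
  (n.+1 * #|~: arrived s| + #|[set act s w | w in arrived s]|)%N.

Lemma classes_le (s : state) : (#|[set act s w | w in arrived s]| <= n)%N.
Proof.
apply: leq_trans (leq_imset_card _ _) _.
by apply: leq_trans (max_card _) _; rewrite card_ord.
Qed.

Lemma step_cases t t' : Inv t -> gd_step t t' ->
  (P t' < P t)%N \/
  [/\ P t' = P t, (forall v, v \notin arrived t -> tau t < atime v),
      (forall u v, ~ tight_cross t (y t) u v) &
      ((exists2 v, v \notin arrived t' & tau t' = atime v) \/
       exists u v, tight_cross t' (y t') u v)].
Proof.
move=> hI st; case: st hI => [s0 u un au _ | s0 u v mt' [ua va _ uv _] ml | s0 d h1 h2 d0 hv hl hend] hI.
- left; rewrite /P /=.
  have E : ~: arrived s0 = u |: ~: (u |: arrived s0).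
    apply/setP => w; rewrite !inE; case: (eqVneq w u) => [->|] //=.
  have Hc : #|~: arrived s0| = #|~: (u |: arrived s0)|.+1.
    by rewrite {1}E cardsU1 !inE eqxx.
  rewrite Hc; have := classes_le (State (tau s0) (u |: arrived s0)
         (fun S => if u \in S then 0 else y s0 S)
         (fun w => if w == u then [set u] else act s0 w) (mate s0)) => /= hc.
  rewrite mulnS; lia.
- left; rewrite /P /= ltn_add2l.
  set S := act s0 u :|: act s0 v.
  set old := [set act s0 w | w in arrived s0].
  have sub : [set (if w \in S then S else act s0 w) | w in arrived s0]
               \subset S |: (old :\: [set act s0 u; act s0 v]).
    apply/subsetP => z /imsetP [w wa ->]; rewrite !inE.
    case: ifP => wS; first by rewrite eqxx.
    apply/orP; right; rewrite (imset_f _ wa) andbT.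
    have ww := i1 hI wa.
    by apply/norP; split; apply/eqP => e; move: wS; rewrite -e ww ?orbT.
  apply: leq_ltn_trans (subset_leq_card sub) _.
  apply: leq_ltn_trans (leq_card_setU _ _) _; rewrite cards1.
  have bs : [set act s0 u; act s0 v] \subset old.
    by apply/subsetP => z; rewrite !inE => /orP [] /eqP ->; apply: imset_f.
  rewrite cardsD (setIidPr bs) cards2 uv.
  have := subset_leq_card bs; rewrite cards2 uv => h; move: h; rewrite /=; lia.
- right; split => //.
Qed.

Lemma no_inf : ~ gd_infinite_run dist pos atime sgn.
Proof.
move=> [f [f0 fs]].
have hI k : Inv (f k).
  by elim: k => [|k IH]; [rewrite f0; exact: Inv_init | exact: Inv_step IH (fs k)].
have le1 k : (P (f k.+1) <= P (f k))%N.
  by case: (step_cases (hI k) (fs k)) => [/ltnW // | [-> _ _ _]].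
have lt2 k : (P (f k.+2) < P (f k))%N.
  case: (step_cases (hI k) (fs k)) => [h | [e1 _ _ hend]].
    exact: leq_ltn_trans (le1 k.+1) h.
  case: (step_cases (hI k.+1) (fs k.+1)) => [h | [_ hlt hnt _]]; first by rewrite -e1.
  case: hend => [[v vn e] | [u [v tc]]].
    by have := hlt _ vn; rewrite e ltxx.
  by case: (hnt u v).
have main k : (P (f k.*2) + k <= P (f 0))%N.
  elim: k => [|k IH]; first by rewrite addn0.
  rewrite doubleS; have := lt2 k.*2; lia.
have := main (P (f 0)).+1; rewrite addnS ltnNge => /negP; apply; exact: leq_addl.
Qed.

Lemma match_loop_ex S mt : exists mt', match_loop sgn S mt mt'.
Proof.
suff H : forall k mt, (#|[set w in S | mt w == None]| <= k)%N -> exists mt', match_loop sgn S mt mt'.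
  exact: H (leqnn _).
elim => [|k IH] {}mt hk.
  exists mt; apply: ml_done => u v uS _ hu _.
  have : u \in [set w in S | mt w == None] by rewrite inE uS hu eqxx.
  by move: hk; rewrite leqn0 cards_eq0 => /eqP ->; rewrite inE.
case: (boolP [exists u : I, [exists v : I,
   [&& u \in S, v \in S, mt u == None, mt v == None & is_edge u v]]]).
  move=> /existsP [u /existsP [v /and5P [uS vS /eqP hu /eqP hv he]]].
  set mt1 := fun w => if w == u then Some v else if w == v then Some u else mt w.
  have [mt' H] : exists mt', match_loop sgn S mt1 mt'.
    apply: IH; rewrite -ltnS; apply: leq_trans hk; apply: proper_card.
    apply/properP; split.
      apply/subsetP => w; rewrite !inE /mt1 => /andP [-> /=].
      by case: (eqVneq w u) => //; case: (eqVneq w v).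
    by exists u; rewrite !inE ?uS ?hu //= /mt1 eqxx.
  by exists mt'; apply: ml_step H.
move=> hn; exists mt; apply: ml_done => u v uS vS hu hv; apply/negP => he.
by move/negP: hn; apply; apply/existsP; exists u; apply/existsP; exists v; rewrite uS vS hu hv he.
Qed.

Definition kk (s : state) (u v : I) : nat :=
  #|[set S : {set I} | ((u \in S) != (v \in S)) && active_growing s S]|.

Lemma load_grow s d u v :
  dual_load (grow_y s d) u v = dual_load (y s) u v + d *+ kk s u v.
Proof.
rewrite /Defs.dual_load; under eq_bigr do rewrite grow_yE.
rewrite big_split /=; congr (_ + _).
rewrite -big_mkcondr /kk -sumr_const; apply: eq_bigl => S; by rewrite inE.
Qed.

Lemma seq_min (l : seq R) : l != [::] -> exists2 x, x \in l & forall z, z \in l -> x <= z.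
Proof.
elim: l => // a l IH _.
case: (eqVneq l [::]) => [-> | /IH [x xl hx]].
  by exists a; rewrite ?inE // => z; rewrite inE => /eqP ->.
case: (leP a x) => h.
  exists a; first by rewrite inE eqxx.
  by move=> z; rewrite inE => /orP [/eqP -> // | /hx]; apply: le_trans.
exists x; first by rewrite inE xl orbT.
by move=> z; rewrite inE => /orP [/eqP -> | /hx //]; apply: ltW.
Qed.

Definition crossing (s : state) (p : I * I) : bool :=
  [&& p.1 \in arrived s, p.2 \in arrived s, is_edge p.1 p.2 & act s p.1 != act s p.2].

Lemma grow_ex s : Inv s ->
  (forall v, v \notin arrived s -> tau s < atime v) ->
  (forall u v, ~ tight_cross s (y s) u v) ->
  (exists v, v \notin arrived s) \/ (exists p, crossing s p && (0 < kk s p.1 p.2)%N) ->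
  exists s', gd_step s s'.
Proof.
move=> hI hlt hnt hc.
set C1 := [seq atime v - tau s | v <- enum (~: arrived s)].
set C2 := [seq (cost p.1 p.2 - dual_load (y s) p.1 p.2) / (kk s p.1 p.2)%:R
            | p <- enum [set p | crossing s p && (0 < kk s p.1 p.2)%N]].
have ne : C1 ++ C2 != [::].
  case: hc => [[v vn] | [p hp]].
    by rewrite /C1; case E: (enum _) => //; have := mem_enum (~: arrived s) v;
       rewrite E inE vn.
  suff : C2 != [::] by case: C1.
  rewrite /C2.
  by case E: (enum _) => //; have := mem_enum [set p | crossing s p && (0 < kk s p.1 p.2)%N] p;
       rewrite E !inE hp.
have [d dC hd] := seq_min ne.
have hC1 : forall v, v \notin arrived s -> d <= atime v - tau s.
  by move=> v vn; apply: hd; rewrite mem_cat; apply/orP; left; apply: map_f; rewrite mem_enum inE.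
have hC2 : forall p, crossing s p -> (0 < kk s p.1 p.2)%N ->
    d <= (cost p.1 p.2 - dual_load (y s) p.1 p.2) / (kk s p.1 p.2)%:R.
  move=> p cp kp; apply: hd; rewrite mem_cat; apply/orP; right; apply: map_f.
  by rewrite mem_enum inE cp kp.
have slack : forall p, crossing s p -> dual_load (y s) p.1 p.2 < cost p.1 p.2.
  move=> [a b] /and4P [aa ba eab ne'] /=; rewrite lt_neqAle (i6 hI aa ba eab ne') andbT.
  by apply/eqP => e; apply: (hnt a b); split.
have d0 : 0 < d.
  move: dC; rewrite mem_cat => /orP [] /mapP [x].
    by rewrite mem_enum inE => xn ->; rewrite subr_gt0; apply: hlt.
  rewrite mem_enum inE => /andP [cx kx] ->; apply: divr_gt0; first by rewrite subr_gt0; exact: slack.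
  by rewrite ltr0n.
exists (State (tau s + d) (arrived s) (grow_y s d) (act s) (mate s)).
apply: step_grow => //.
- by move=> v vn; rewrite -lerBrDl; exact: hC1.
- move=> a b aa ba eab ne'; rewrite load_grow.
  have cp : crossing s (a, b) by rewrite /crossing /= aa ba eab ne'.
  case: (posnP (kk s a b)) => [-> | kp]; first by rewrite mulr0n addr0 (i6 hI).
  have := hC2 _ cp kp; rewrite /= ler_pdivlMr ?ltr0n // mulr_natr.
  by rewrite lerBrDl addrC.
- move: dC; rewrite mem_cat => /orP [] /mapP [x].
    by rewrite mem_enum inE => xn ->; left; exists x => //; rewrite addrC subrK.
  rewrite mem_enum inE => /andP [cx kx] ed; right; exists x.1, x.2.
  case/and4P: (cx) => aa ba eab ne'; split => //.
  by rewrite load_grow ed -[X in _ + X]mulr_natr mulfVK ?pnatr_eq0 -?lt0n // addrC subrK.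
Qed.

Lemma stuck_perfect s :
  (forall mt, M1 mt -> forall w, mt w = None -> exists w', mt w' = None /\ is_edge w w') ->
  Inv s -> (forall s', ~ gd_step s s') -> perfect_feasible sgn (mate s).
Proof.
move=> hfree hI hst.
have nt : forall u v, ~ tight_cross s (y s) u v.
  move=> u v tc; have [mt' ml] := match_loop_ex (act s u :|: act s v) (mate s).
  exact: hst _ (step_merge tc ml).
have hlt : forall v, v \notin arrived s -> tau s < atime v.
  move=> v0 v0n; rewrite ltNge; apply/negP => hv0.
  case: (@arg_minnP _ v0 (fun i : I => i \notin arrived s) (fun i : I => val i) v0n) => i iun imin.
  apply: (hst _ (step_arrive dist pos sgn iun _ _)).
    apply: le_anti; rewrite (i5 hI iun) andbT.
    by apply: le_trans hv0; apply: atime_mono; exact: imin.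
  move=> v vi; apply/negPn/negP => vn; have := imin _ vn.
  by rewrite leqNgt vi.
have alla : forall v, v \in arrived s.
  move=> v; apply/negPn/negP => vn.
  have [s' st] := grow_ex hI hlt nt (or_introl (ex_intro _ v vn)).
  exact: hst _ st.
move=> u; case E: (mate s u) => [v|].
  by have [e1 e2] := m1 hI E; exists v.
exfalso; have [w [hw euw]] := hfree _ (m1 hI) _ E.
have ne : act s u != act s w.
  apply/eqP => e; have := m4 hI (alla u) (alla w) e E hw; by rewrite euw.
have kp : (0 < kk s u w)%N.
  apply/card_gt0P; exists (act s u); rewrite inE i1 ?alla //=.
  apply/andP; split.
    apply/negP => /eqP wu; move/eqP: ne; apply; have := i2 hI (alla u) (alla w); rewrite -wu => h; by rewrite h.
  rewrite /active_growing; apply/andP; split; apply/existsP.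
    by exists u; rewrite alla eqxx.
  by exists u; rewrite i1 ?alla // E eqxx.
have cw : crossing s (u, w) && (0 < kk s (u, w).1 (u, w).2)%N.
  by rewrite /crossing /= !alla euw ne kp.
have [s' st] := grow_ex hI hlt nt (or_intror (ex_intro _ (u, w) cw)).
exact: hst _ st.
Qed.

Section Involution.
Variable mt : I -> option I.
Hypothesis hM : M1 mt.
Let mt' u := odflt u (mt u).

Lemma mt'K : cancel mt' mt'.
Proof.
move=> u; rewrite /mt'; case E: (mt u) => [v|] /=; last by rewrite E.
by have [-> _] := hM E.
Qed.

Lemma mt'_matched u : (mt (mt' u) != None) = (mt u != None).
Proof.
rewrite /mt'; case E: (mt u) => [v|] /=; last by rewrite E.
by have [-> _] := hM E.
Qed.

Lemma mt'_edge u : mt u != None -> is_edge u (mt' u).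
Proof. by rewrite /mt'; case E: (mt u) => [v|] //= _; have [_ ->] := hM E. Qed.

Lemma free_partner_MPMD : (forall i, sgn i = 0) -> ~~ odd n ->
  forall w, mt w = None -> exists w', mt w' = None /\ is_edge w w'.
Proof.
move=> h0 ev w hw.
case: (boolP [exists w', (mt w' == None) && (w' != w)]).
  move/existsP => [w' /andP [/eqP h1 h2]]; exists w'; split => //.
  by rewrite /Defs.is_edge eq_sym h2 !h0 oppr0 eqxx.
move=> hn.
set L := [set u | (mt u != None) && (val u < val (mt' u))%N].
set Rr := [set u | (mt u != None) && (val (mt' u) < val u)%N].
have eR : Rr = mt' @: L.
  apply/setP => x; apply/idP/imsetP.
    rewrite inE => /andP [m1 lt]; exists (mt' x); last by rewrite mt'K.
    by rewrite inE mt'_matched m1 mt'K.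
  move=> [z]; rewrite inE => /andP [m1 lt] ->.
  by rewrite inE mt'_matched m1 mt'K.
have cR : #|Rr| = #|L| by rewrite eR card_imset //; exact: can_inj mt'K.
have dis : L :&: Rr = set0.
  apply/setP => x; rewrite !inE; apply/negP => /andP [/andP [_ a] /andP [_ b]].
  by have := ltn_trans a b; rewrite ltnn.
have cov : [set u | mt u != None] = L :|: Rr.
  apply/setP => x; rewrite !inE; case m: (mt x != None) => //=.
  have := edge_neq (mt'_edge m); rewrite -val_eqE /=.
  by case: ltngtP.
have cF : ~: [set u | mt u != None] = [set w].
  apply/setP => x; rewrite !inE; apply/idP/idP.
    move=> h; apply/negPn/negP => xw; move/negP: hn; apply.
    by apply/existsP; exists x; rewrite xw andbT; move: h; case: (mt x).
  by move/eqP ->; rewrite hw.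
have := cardsC [set u | mt u != None]; rewrite cF cards1 cov cardsU dis cards0 cR.
move=> e; suff : odd n by rewrite (negbTE ev).
by rewrite -(card_ord n) -e subn0 addnn addn1 /= odd_double.
Qed.

Lemma free_partner_MBPMD : (forall i, sgn i = 1 \/ sgn i = -1) -> \sum_i sgn i = 0 ->
  forall w, mt w = None -> exists w', mt w' = None /\ is_edge w w'.
Proof.
move=> hs htot w hw.
have sm : \sum_(u | mt u != None) sgn u = 0.
  have e := reindex_inj (can_inj mt'K) (P := fun u => mt u != None) (F := sgn) (op := +%R) (x := 0%R).
  have e2 : \sum_(u | mt u != None) sgn u = - \sum_(u | mt u != None) sgn u.
    rewrite {1}e -sumrN; apply: eq_big => u; first by rewrite mt'_matched.
    move=> m; rewrite mt'_matched in m; have := mt'_edge m; case/andP => _ /eqP ->; by rewrite opprK.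
  by move/eqP: e2; rewrite -subr_eq0 opprK -mulr2n mulrn_eq0 /= => /eqP.
have sf : \sum_(u | mt u == None) sgn u = 0.
  move: htot; rewrite (bigID (fun u => mt u != None)) /= sm add0r => h; rewrite -[X in _ = X]h.
  by apply: eq_bigl => u; rewrite negbK.
case: (boolP [exists w', (mt w' == None) && (sgn w' == - sgn w)]).
  move/existsP => [w' /andP [/eqP h1 /eqP h2]]; exists w'; split => //.
  rewrite /Defs.is_edge h2 opprK eqxx andbT.
  apply/eqP => e; rewrite -e in h2; move: h2; case: (hs w) => ->; lia.
move=> hn; exfalso.
have : \sum_(u | mt u == None) sgn u = sgn w *+ #|[set u | mt u == None]|.
  rewrite -sumr_const; apply: eq_big => u; first by rewrite inE.
  move=> hu; case: (hs u) => hu1; case: (hs w) => hw1; rewrite hu1 hw1 //;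
  move/negP: hn; case; apply/existsP; exists u; rewrite hu hu1 hw1 //.
rewrite sf => /esym/eqP; rewrite mulrn_eq0 => /orP [].
  by rewrite cards_eq0 => /eqP e; move: (in_set0 w); rewrite -e inE hw eqxx.
by case: (hs w) => ->.
Qed.
End Involution.

End Proof.

Lemma sum_sgn_MB (m : nat) (sgn : 'I_(m.*2) -> int) :
  MBPMD_signs sgn -> \sum_i sgn i = 0.
Proof.
move=> [h1 hc].
rewrite (bigID (fun i => sgn i == 1)) /=.
rewrite (eq_bigr (fun _ => 1)) => [|i /eqP //].
rewrite [X in _ + X](eq_bigr (fun _ => -1)) => [|i hi]; last by case: (h1 i) hi => ->.
have e1 : \sum_(i | sgn i == 1) (1 : int) = #|[set i | sgn i == 1]|%:R.
  by rewrite -sumr_const; apply: eq_bigl => i; rewrite inE.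
have e2 : \sum_(i | sgn i != 1) (-1 : int) = (-1) *+ #|~: [set i | sgn i == 1]|.
  by rewrite -sumr_const; apply: eq_bigl => i; rewrite !inE.
have cc : (#|[set i | sgn i == 1]| + #|~: [set i | sgn i == 1]| = m.*2)%N.
  by rewrite cardsC; exact: card_ord.
have c2 : #|~: [set i | sgn i == 1]| = m.
  move: cc hc. set a := #|_|. set b := #|_|. move=> c1 c3; rewrite -addnn c3 in c1; exact: (addnI c1).
by rewrite e1 e2 c2 hc mulNrn subrr.
Qed.

Unset Implicit Arguments.
Set Strict Implicit.
Set Printing Implicit Defensive.

Theorem lemma4 (R : realFieldType) (X : Type) (dist : X -> X -> R) (m : nat)
    (pos : 'I_(m.*2) -> X) (atime : 'I_(m.*2) -> R) (sgn : 'I_(m.*2) -> int) :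
  is_metric dist ->
  valid_times atime ->
  (MPMD_signs sgn \/ MBPMD_signs sgn) ->
  (* every run of GD is finite ... *)
  ~ gd_infinite_run dist pos atime sgn /\
  (* ... and whenever GD can make no further step, all requests are matched *)
  (forall s, gd_reachable dist pos atime sgn s ->
     (forall s', ~ gd_step dist pos atime sgn s s') ->
     perfect_feasible sgn (mate s)).
Proof.
move=> [dge0 _ _ _] [tge0 tmono] hs; split.
  exact: no_inf dge0 tge0.
move=> s hr hst; apply: (stuck_perfect tmono _ (Inv_reach dge0 tge0 hr) hst).
move=> mt hM w hw; case: hs => hs.
  by apply: (free_partner_MPMD hM hs _ hw); rewrite odd_double.
exact: (free_partner_MBPMD hM (proj1 hs) (sum_sgn_MB hs) hw).
Qed.
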